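(* There is a function $f'$ with $f'(t,k)=O_t(k^t)$ (i.e., for each fixed $t$ there is $C_t$ with $f'(t,k)\le C_t k^t$ for all $k\ge1$) such that every $\mathcal{O}_k$-free graph $G$ with no $K_{t,t}$ subgraph contains a set $X$ of at most $f'(t,k)$ vertices intersecting every banana of $G$.
   Context: All graphs are finite and simple. Two vertex-disjoint subgraphs are independent if there is no edge between them. A graph $G$ is $\mathcal{O}_k$-free if it does not contain $k$ pairwise vertex-disjoint and pairwise independent cycles; equivalently, $G$ has no induced subgraph isomorphic to a disjoint union of $k$ cycles. A banana in $G$ is a pair of distinct vertices together with at least two internally vertex-disjoint paths between them all of whose internal vertices have degree exactly 2 in $G$; a set $X$ intersects the banana if it contains a vertex of the banana (one of the two vertices or an internal vertex of one of these paths). *)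

(* Defs.v *)
From mathcomp Require Import all_boot.
Set Implicit Arguments. Unset Strict Implicit. Unset Printing Implicit Defensive.

Section Graphs.
Variables (T : finType) (e : rel T).

Definition simple_graph : Prop := symmetric e /\ irreflexive e.

Definition deg (v : T) : nat := #|[set w | e v w]|.

Definition is_cycle (c : seq T) : Prop := [/\ uniq c, 3 <= size c & cycle e c].

Definition independent (A B : seq T) : Prop :=
  forall u v, u \in A -> v \in B -> ~~ e u v.

Definition has_Ok (k : nat) : Prop :=
  exists cs : 'I_k -> seq T,
    (forall i, is_cycle (cs i)) /\
    (forall i j, i != j -> [disjoint cs i & cs j] /\ independent (cs i) (cs j)).

Definition Ok_free (k : nat) : Prop := ~ has_Ok k.

Definition has_Ktt_subgraph (t : nat) : Prop :=
  exists A B : {set T}, [/\ #|A| = t, #|B| = t, [disjoint A & B] &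
    forall a b, a \in A -> b \in B -> e a b].

Definition is_xy_path (x y : T) (p : seq T) : Prop :=
  path e x (rcons p y) /\ uniq (x :: rcons p y).

Definition is_banana (x y : T) (ps : seq (seq T)) : Prop :=
  [/\ x != y, 2 <= size ps, uniq ps,
      forall p, p \in ps -> is_xy_path x y p /\ (forall v, v \in p -> deg v = 2)
    & forall i j, i < j < size ps -> [disjoint nth [::] ps i & nth [::] ps j]].

Definition hits_banana (X : {set T}) (x y : T) (ps : seq (seq T)) : Prop :=
  x \in X \/ y \in X \/ exists2 p, p \in ps & exists2 v, v \in p & v \in X.

End Graphs.

(* Main.v *)
Require Import Defs.
From mathcomp Require Import all_boot zify.
From Stdlib Require Import Classical ClassicalEpsilon.
Set Implicit Arguments. Unset Strict Implicit. Unset Printing Implicit Defensive.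

Lemma leq_pexp2r m n e : m <= n -> m ^ e <= n ^ e.
Proof. by move=> le; elim: e => // e IH; rewrite !expnS leq_mul. Qed.

Lemma ffact_ub n m : n ^_ m <= n ^ m.
Proof.
elim: m n => [|m IH] n; first by [].
rewrite ffactnS expnS leq_mul2l; apply/orP; right.
apply: leq_trans (IH _) _; apply: leq_pexp2r => //; exact: leq_pred.
Qed.

Lemma ffact_lb n m : (n - m) ^ m <= n ^_ m.
Proof.
elim: m n => [|m IH] n; first by [].
rewrite ffactnS expnS; apply: leq_mul; first exact: leq_subr.
apply: leq_trans (IH _); apply: leq_pexp2r => //; lia.
Qed.

Definition aC u := u.+1 * 8 ^ u.+1.
Definition bC u := 2 * aC u + 2 * u.+1.
Definition sC u k := aC u * k ^ u + u.+1.

Lemma arith u k n : 0 < k -> 0 < n -> n <= bC u * k ^ u.+1 ->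
  u * 'C(2 * n, u.+1) < n * 'C(sC u k, u.+1).
Proof.
move=> k0 n0 nb.
have f0 : 0 < (u.+1)`! := fact_gt0 _.
rewrite -(ltn_pmul2r f0) -!mulnA !bin_ffact.
have a0 : 0 < aC u by rewrite /aC muln_gt0 expn_gt0.
have L1 : u * (2 * n) ^_ u.+1 <= n * (u * 2 ^ u.+1 * n ^ u).
  apply: leq_trans (leq_mul (leqnn u) (ffact_ub _ _)) _.
  rewrite expnMn !expnS; nia.
have L2 : n * (aC u * k ^ u) ^ u.+1 <= n * (sC u k) ^_ u.+1.
  rewrite leq_mul2l; apply/orP; right.
  by apply: leq_trans (ffact_lb _ _); rewrite /sC addnK.
apply: leq_trans L2; apply: leq_ltn_trans L1 _.
rewrite ltn_pmul2l //.
have L3 : n ^ u <= bC u ^ u * k ^ (u.+1 * u).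
  by rewrite expnM -expnMn; apply: leq_pexp2r.
have L4 : bC u <= 4 * aC u.
  rewrite /bC /aC; have : 1 <= 8 ^ u.+1 by rewrite expn_gt0.
  nia.
have L5 : u * 2 ^ u.+1 * 4 ^ u < aC u.
  have e1 : 2 ^ u.+1 * 4 ^ u = 2 * 8 ^ u by rewrite expnS -mulnA -expnMn.
  rewrite /aC -mulnA e1 expnS.
  have : 0 < 8 ^ u by rewrite expn_gt0.
  nia.
have K0 : 0 < k ^ (u.+1 * u) by rewrite expn_gt0 k0.
have A0 : 0 < aC u ^ u by rewrite expn_gt0 a0.
rewrite expnMn -expnM.
apply: leq_ltn_trans (leq_mul (leqnn (u * 2 ^ u.+1)) L3) _.
rewrite (mulnC u.+1 u) mulnA ltn_pmul2r ?expn_gt0 ?k0 //.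
have H1 : u * 2 ^ u.+1 * bC u ^ u <= u * 2 ^ u.+1 * (4 ^ u * aC u ^ u).
  rewrite leq_mul2l -expnMn; apply/orP; right; exact: leq_pexp2r.
apply: leq_ltn_trans H1 _.
by rewrite (expnS (aC u)) mulnA ltn_pmul2r // L5.
Qed.


Lemma greedy (P : finType) (adj : rel P) d : symmetric adj -> 0 < d ->
  forall S : {set P},
  (forall S' : {set P}, S' \subset S -> S' != set0 ->
     exists2 p, p \in S' & #|[set q in S' | (q != p) && adj p q]| < d) ->
  exists I : {set P}, [/\ I \subset S,
     (forall p q, p \in I -> q \in I -> p != q -> ~~ adj p q) & #|S| <= d * #|I|].
Proof.
move=> asym d0 S; have [n le] : exists n, #|S| <= n by exists #|S|.
elim: n S le => [|n IH] S le H.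
  exists set0; split; first exact: sub0set.
  - by move=> a b; rewrite inE.
  - by move: le; rewrite leqn0 => /eqP->.
case: (eqVneq S set0) => [->|Sn0].
  exists set0; split; first exact: sub0set.
  - by move=> a b; rewrite inE.
  - by rewrite cards0.
have [p pS degp] := H S (subxx _) Sn0.
set N := [set q in S | (q != p) && adj p q] in degp.
set S' := S :\: (p |: N).
have sS' : S' \subset S by apply: subsetDl.
have pS' : p \notin S' by rewrite !inE eqxx.
have lt : #|S'| < #|S| by apply: proper_card; apply/properP; split => //; exists p.
have [I' [sI' indI' cI']] : exists I : {set P}, [/\ I \subset S',
     (forall p q, p \in I -> q \in I -> p != q -> ~~ adj p q) & #|S'| <= d * #|I|].
  apply: IH; first by move: le lt; lia.
  by move=> S2 s2 n2; apply: H => //; apply: subset_trans sS'.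
have pI' : p \notin I' by apply: contra pS'; apply: (subsetP sI').
have qN q : q \in I' -> ~~ adj p q.
  move=> qI; have := subsetP sI' _ qI.
  rewrite in_setD in_setU1 negb_or => /andP[/andP[qp qnN] qS].
  by move: qnN; rewrite inE qS qp.
exists (p |: I'); split.
- by apply/subsetP=> q; rewrite !inE => /orP[/eqP->//|/(subsetP sI')/(subsetP sS')].
- move=> a b; rewrite !inE => /orP[/eqP->|aI] /orP[/eqP->|bI]; rewrite ?eqxx //.
  + by move=> _; apply: qN.
  + by move=> _; rewrite asym; apply: qN.
  + exact: indI'.
- rewrite cardsU1 pI' /=.
  have : #|S| <= #|S'| + #|p |: N|.
    rewrite -(cardsID (p |: N) S) addnC leq_add2l.
    by apply: subset_leq_card; apply: subsetIr.
  have : #|p |: N| <= 1 + #|N| by rewrite cardsU1; case: (p \in N).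
  move: degp cI'; lia.
Qed.


Section G.
Variables (T : finType) (e : rel T).
Hypothesis esym : symmetric e.
Hypothesis eirr : irreflexive e.

Lemma nbr_two v a b w : deg e v = 2 -> a != b -> e v a -> e v b -> e v w ->
  w = a \/ w = b.
Proof.
move=> d2 ab ea eb ew.
have sub : [set a; b] \subset [set w | e v w].
  by apply/subsetP=> z; rewrite !inE => /orP[]/eqP->.
have : [set a; b] = [set w | e v w].
  apply/eqP; rewrite eqEcard sub /= cards2 ab.
  by move: d2; rewrite /deg => ->.
by move/setP/(_ w); rewrite !inE ew => /orP[]/eqP->; [left|right].
Qed.

Lemma cycle_nbrs c v : is_cycle e c -> v \in c ->
  exists a b, [/\ a != b, a \in c, b \in c, e v a & e v b].
Proof.
case=> uc sc cc vc.
case: (rot_to vc) => i s' E.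
have uc' : uniq (v :: s') by rewrite -E rot_uniq.
have cc' : cycle e (v :: s') by rewrite -E rot_cycle.
have sc' : 3 <= size (v :: s') by rewrite -E size_rot.
have memc z : z \in v :: s' -> z \in c by rewrite -E mem_rot.
clear E; case: s' uc' cc' sc' memc => [|a s''] //= uc' cc' sc' memc.
case: s'' uc' cc' sc' memc => [|a2 s3] //= uc' cc' sc' memc.
move: cc'; rewrite /= rcons_path /= => /and4P[va _ _ lb].
exists a, (last a2 s3); split.
- move: uc' => /and4P[_ H _ _].
  apply/eqP=> E1; move: H; rewrite E1 mem_last //.
- by apply: memc; rewrite !inE eqxx orbT.
- by apply: memc; rewrite in_cons in_cons mem_last !orbT.
- by [].
- by rewrite esym.
Qed.

Lemma cycle_closed c v w : is_cycle e c -> v \in c -> deg e v = 2 -> e v w -> w \in c.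
Proof.
move=> cy vc d2 ew; have [a [b [ab ac bc ea eb]]] := cycle_nbrs cy vc.
by case: (nbr_two d2 ab ea eb ew) => ->.
Qed.

Lemma esymC : connect_sym e. Proof. exact: sym_connect_sym. Qed.

Lemma cycle_connect c u v : is_cycle e c -> u \in c -> v \in c -> connect e u v.
Proof.
case=> _ _; case: c => [|x0 r] //= cc uc vc.
have H z : z \in x0 :: r -> connect e x0 z.
  move=> zc; apply: (path_connect cc); rewrite /= in_cons mem_rcons.
  by move: zc; rewrite in_cons => /orP[->|->]; rewrite ?orbT.
by apply: connect_trans (H _ vc); rewrite esymC; apply: H.
Qed.

Lemma closed_connect (Z : pred T) x w :
  (forall z y, Z z -> e z y -> Z y) -> Z x -> connect e x w -> Z w.
Proof.
move=> cl Zx /connectP[p pp ->]; elim: p x Zx pp => [|y p IH] x Zx //=.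
by case/andP=> exy pp; apply: IH pp; apply: cl exy.
Qed.

Definition cycprop x y c := [/\ is_cycle e c, x \in c, y \in c &
  forall v, v \in c -> v != x -> v != y -> deg e v = 2].

Lemma banana_cycle x y ps : is_banana e x y ps -> exists c, cycprop x y c /\
  (forall v, v \in c -> [\/ v = x, v = y | exists2 p, p \in ps & v \in p]).
Proof.
case=> xy sz ups hp hd.
set p1 := nth [::] ps 0; set p2 := nth [::] ps 1.
have p1in : p1 \in ps by apply: mem_nth; apply: leq_trans sz.
have p2in : p2 \in ps by apply: mem_nth.
have p12 : p1 != p2.
  by rewrite /p1 /p2 (nth_uniq _ _ _ ups) //; apply: leq_trans sz.
have dj : [disjoint p1 & p2] by apply: hd.
have [[pa ua] da] := hp _ p1in; have [[pb ub] db] := hp _ p2in.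
exists (x :: p1 ++ y :: rev p2); split; first split.
- split.
  + rewrite -cat_rcons -cat_cons cat_uniq ua rev_uniq /=.
    move: ub; rewrite /= mem_rcons in_cons negb_or rcons_uniq => /andP[/andP[_ xb] /andP[yb ub]].
    rewrite ub andbT; apply/hasPn=> z; rewrite mem_rev => zb.
    rewrite in_cons mem_rcons in_cons negb_or negb_or.
    have -> : z != x by apply: contraNneq xb => <-.
    have -> : z != y by apply: contraNneq yb => <-.
    by rewrite /= (disjointFl dj zb).
  + rewrite /= size_cat /= size_rev.
    have : 0 < size p1 + size p2.
      rewrite lt0n addn_eq0 !size_eq0; apply: contra p12 => /andP[/eqP-> /eqP->] //.
    by rewrite addnS /= ltnS ltnS.
  + rewrite /= rcons_cat rcons_cons -cat_rcons cat_path pa last_rcons /=.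
    have := rev_path e x (rcons p2 y); rewrite last_rcons belast_rcons rev_cons => ->.
    by rewrite (@eq_path _ _ e) // => a b /=; rewrite esym.
- by rewrite inE eqxx.
- by rewrite in_cons mem_cat in_cons eqxx !orbT.
- move=> v; rewrite in_cons mem_cat in_cons mem_rev => /or4P[/eqP->|vp|/eqP->|vp].
  + by rewrite eqxx.
  + by move=> _ _; apply: da.
  + by rewrite eqxx.
  + by move=> _ _; apply: db.
- move=> v; rewrite in_cons mem_cat in_cons mem_rev => /or4P[/eqP->|vp|/eqP->|vp].
  + by constructor 1.
  + by constructor 3; exists p1.
  + by constructor 2.
  + by constructor 3; exists p2.
Qed.

Definition pset (q : T * T) : {set T} := [set q.1; q.2].
Definition bad v := [forall w, connect e v w ==> (deg e w == 2)].
Definition Rp (q : T * T) := exists c, cycprop q.1 q.2 c.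
Definition valid (M : {set T * T}) :=
  (forall q, q \in M -> Rp q) /\
  (forall p q, p \in M -> q \in M -> p != q ->
     [disjoint pset p & pset q] /\ ~ (bad p.1 /\ connect e p.1 q.1)).
Definition hadj (p q : T * T) := [exists u in pset p, exists w in pset q, e u w].

Lemma exc (q : T * T) : exists c, Rp q -> cycprop q.1 q.2 c.
Proof.
case: (classic (Rp q)) => [[c Hc]|nR]; first by exists c.
by exists [::].
Qed.

Definition cyc q := proj1_sig (constructive_indefinite_description _ (exc q)).

Lemma cycP q : Rp q -> cycprop q.1 q.2 (cyc q).
Proof. exact: (proj2_sig (constructive_indefinite_description _ (exc q))). Qed.

Lemma internal_deg q v : Rp q -> v \in cyc q -> v \notin pset q -> deg e v = 2.
Proof.
move=> /cycP[_ _ _ H] vc; rewrite !inE negb_or => /andP[a b]; exact: H.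
Qed.

Lemma cyc_disj M p q : valid M -> p \in M -> q \in M -> p != q ->
  forall z, z \in cyc p -> z \in cyc q -> False.
Proof.
move=> [VR VD] pM qM pq; have [dj nb] := VD _ _ pM qM pq.
have Rpp := VR _ pM; have Rpq := VR _ qM.
have [cy1 p1c _ _] := cycP Rpp; have [cy2 q1c _ _] := cycP Rpq.
have dz z : z \in cyc p -> z \in cyc q -> deg e z = 2.
  move=> z1 z2; case: (boolP (z \in pset p)) => zp.
  - by apply: (internal_deg Rpq z2); rewrite (disjointFr dj zp).
  - exact: (internal_deg Rpp z1).
move=> z z1 z2.
pose Z := fun w => (w \in cyc p) && (w \in cyc q).
have cl : forall a b, Z a -> e a b -> Z b.
  move=> a b /andP[a1 a2] eab; have d := dz _ a1 a2.
  by rewrite /Z (cycle_closed cy1 a1 d eab) (cycle_closed cy2 a2 d eab).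
apply: nb; split.
- apply/forallP=> w; apply/implyP=> cw.
  have Zz : Z z by rewrite /Z z1 z2.
  have cz : connect e z w.
    by apply: connect_trans cw; rewrite esymC; apply: (cycle_connect cy1).
  by have /andP[w1 w2] := closed_connect cl Zz cz; rewrite (dz _ w1 w2).
- apply: connect_trans (cycle_connect cy1 p1c z1) _.
  exact: (cycle_connect cy2 z2 q1c).
Qed.

Lemma cyc_indep M p q : valid M -> p \in M -> q \in M -> p != q -> ~~ hadj p q ->
  [disjoint cyc p & cyc q] /\ independent e (cyc p) (cyc q).
Proof.
move=> V pM qM pq nh; have dis := cyc_disj V pM qM pq.
have Rpp := V.1 _ pM; have Rpq := V.1 _ qM.
have [cy1 _ _ _] := cycP Rpp; have [cy2 _ _ _] := cycP Rpq.
split.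
- apply/pred0P=> z /=; apply/negbTE/negP=> /andP[z1 z2]; exact: (dis z).
- move=> u w u1 w2; apply/negP=> euw.
  case: (boolP (u \in pset p)) => up; last first.
    have := cycle_closed cy1 u1 (internal_deg Rpp u1 up) euw.
    by move=> w1; apply: (dis w).
  case: (boolP (w \in pset q)) => wq; last first.
    rewrite esym in euw.
    have := cycle_closed cy2 w2 (internal_deg Rpq w2 wq) euw.
    by move=> u2; apply: (dis u).
  move/negP: nh; apply; apply/existsP; exists u; rewrite up /=.
  by apply/existsP; exists w; rewrite wq.
Qed.

Lemma ok_from M (I : {set T * T}) k : valid M -> I \subset M -> #|I| = k ->
  (forall p q, p \in I -> q \in I -> p != q -> ~~ hadj p q) -> has_Ok e k.
Proof.
move=> V sIM cI ind.
pose f (i : 'I_k) := enum_val (cast_ord (sym_eq cI) i).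
have fI i : f i \in I by apply: enum_valP.
have finj : injective f.
  by move=> i j /enum_val_inj /cast_ord_inj.
exists (fun i => cyc (f i)); split.
- move=> i; have := V.1 _ (subsetP sIM _ (fI i)).
  by case/cycP.
- move=> i j ij; have fij : f i != f j by apply: contra ij => /eqP /finj ->.
  apply: (cyc_indep V (subsetP sIM _ (fI i)) (subsetP sIM _ (fI j)) fij).
  exact: ind.
Qed.

Lemma sub_card (U : finType) (C : {set U}) n : n <= #|C| ->
  exists B : {set U}, B \subset C /\ #|B| = n.
Proof.
elim: n => [|n IH] le; first by exists set0; rewrite sub0set cards0.
have [B [sB cB]] := IH (ltnW le).
have : #|C :\: B| > 0 by rewrite cardsD (setIidPr sB) cB subn_gt0.
case/card_gt0P=> x; rewrite in_setD => /andP[xB xC].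
exists (x |: B); split; last by rewrite cardsU1 xB cB.
by apply/subsetP=> z; rewrite in_setU1 => /orP[/eqP->//|/(subsetP sB)].
Qed.

Section Dense.
Variables (t s : nat) (S : {set T * T}).
Hypothesis noK : ~ has_Ktt_subgraph e t.
Hypothesis pdisj : forall p q, p \in S -> q \in S -> p != q -> [disjoint pset p & pset q].
Hypothesis dgS : forall p, p \in S -> 2 * s <= #|[set q in S | (q != p) && hadj p q]|.

Let W : {set T} := ((fun q : T * T => q.1) @: S) :|: ((fun q : T * T => q.2) @: S).
Let NW u := [set w in W | e u w].

Lemma cardW : #|W| <= 2 * #|S|.
Proof. by rewrite mul2n -addnn; apply: leq_trans (leq_card_setU _ _) _; apply: leq_add; apply: leq_imset_card. Qed.

Lemma in_pset_W q w : q \in S -> w \in pset q -> w \in W.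
Proof.
move=> qS; rewrite !inE => /orP[]/eqP->; apply/orP; [left|right]; apply/imsetP; by exists q.
Qed.

Lemma pset_inj p q w : p \in S -> q \in S -> w \in pset p -> w \in pset q -> p = q.
Proof.
move=> pS qS wp wq; apply/eqP; apply/negP=> /negP pq.
by have := pdisj pS qS pq; move/disjointFr/(_ wp); rewrite wq.
Qed.

Lemma deg_split p : p \in S -> 2 * s <= #|NW p.1| + #|NW p.2|.
Proof.
move=> pS; apply: leq_trans (dgS pS) _.
set N := [set q in S | (q != p) && hadj p q].
pose g q := odflt q.1 [pick w in pset q | e p.1 w || e p.2 w].
have gP q : q \in N -> g q \in pset q /\ (e p.1 (g q) || e p.2 (g q)).
  rewrite inE => /and3P[qS _ /existsP[u /andP[up /existsP[w /andP[wq euw]]]]].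
  rewrite /g; case: pickP => [w' /andP[]//|none].
  move: (none w); rewrite wq /=; move: up; rewrite !inE => /orP[]/eqP<-; by rewrite euw ?orbT.
have ginj : {in N &, injective g}.
  move=> a b aN bN eab; have [ga _] := gP _ aN; have [gb _] := gP _ bN.
  move: aN bN; rewrite !inE => /andP[aS _] /andP[bS _].
  by apply: (pset_inj aS bS ga); rewrite eab.
rewrite -(card_in_imset ginj); apply: leq_trans (leq_card_setU _ _).
apply: subset_leq_card; apply/subsetP=> w /imsetP[q qN ->].
have [gq eg] := gP _ qN; have qS : q \in S by move: qN; rewrite inE => /andP[].
by move: (in_pset_W qS gq) eg; rewrite in_setU /NW !in_set /W => ->.
Qed.

Let h (p : T * T) := if s <= #|NW p.1| then p.1 else p.2.

Lemma hP p : p \in S -> h p \in pset p /\ s <= #|NW (h p)|.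
Proof.
move=> pS; have := deg_split pS; rewrite /h !inE; case: ifP => le; first by rewrite eqxx.
by rewrite eqxx orbT => H; split => //; move: le H; lia.
Qed.

Lemma KST : #|S| * 'C(s, t) <= (t - 1) * 'C(2 * #|S|, t).
Proof.
have hinj : {in S &, injective h}.
  by move=> a b aS bS eab; have [ha _] := hP aS; have [hb _] := hP bS;
     apply: (pset_inj aS bS ha); rewrite eab.
set U := h @: S.
set F := [set A : {set T} | A \subset W & #|A| == t].
have E : \sum_(u in U) \sum_(A in F) (A \subset NW u : nat) =
         \sum_(A in F) \sum_(u in U) (A \subset NW u : nat) by apply: exchange_big.
have L : #|U| * 'C(s, t) <= \sum_(u in U) \sum_(A in F) (A \subset NW u : nat).
  rewrite -sum_nat_const; apply: leq_sum => u uU.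
  rewrite -big_mkcondr /= sum1_card.
  have -> : #|[pred A in F | A \subset NW u]| = 'C(#|NW u|, t).
    rewrite -cards_draws; apply: eq_card => A; rewrite !inE /=.
    case sA: (A \subset NW u); rewrite ?andbT ?andbF //.
    rewrite (subset_trans sA) //; apply/subsetP=> w; rewrite inE; by case/andP.
  apply: leq_bin2l; case/imsetP: uU => p pS ->; exact: (hP pS).2.
have R : \sum_(A in F) \sum_(u in U) (A \subset NW u : nat) <= #|F| * (t - 1).
  rewrite -sum_nat_const; apply: leq_sum => A; rewrite inE => /andP[AW /eqP cA].
  rewrite -big_mkcondr /= sum1_card.
  rewrite leqNgt; apply/negP=> lt.
  have cle : t <= #|[set u in U | A \subset NW u]|.
    by rewrite cardsE; move: lt; lia.
  have [B [sB cB]] := sub_card cle.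
  apply: noK; exists A, B; split => //.
  - apply/pred0P=> x /=; apply/negbTE/negP=> /andP[xA xB].
    have := subsetP sB _ xB; rewrite inE => /andP[_ /subsetP /(_ _ xA)].
    by rewrite inE eirr andbF.
  - move=> a b aA bB; have := subsetP sB _ bB; rewrite inE => /andP[_ /subsetP /(_ _ aA)].
    by rewrite inE esym => /andP[].
have cU : #|U| = #|S| by apply: card_in_imset.
have cF : #|F| <= 'C(2 * #|S|, t).
  by rewrite /F cards_draws; apply: leq_bin2l; apply: cardW.
rewrite -cU; apply: leq_trans L _; rewrite E; apply: leq_trans R _.
by rewrite cU mulnC leq_mul2l cF orbT.
Qed.
End Dense.


Lemma hadj_sym : symmetric hadj.
Proof.
suff H p q : hadj p q -> hadj q p by move=> p q; apply/idP/idP; apply: H.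
case/existsP=> u /andP[up /existsP[w /andP[wq euw]]].
by apply/existsP; exists w; rewrite wq /=; apply/existsP; exists u; rewrite up esym.
Qed.

Lemma bad_connect a b : bad a -> connect e a b -> bad b.
Proof.
move=> /forallP ba cab; apply/forallP=> w; apply/implyP=> cbw.
by have /implyP := ba w; apply; apply: connect_trans cab cbw.
Qed.

Lemma valid0 : valid set0.
Proof. by split=> [q|p q]; rewrite inE. Qed.

Definition maximal (M : {set T * T}) := forall q, q \notin M -> ~ valid (q |: M).

Lemma maximal_exists : exists M, valid M /\ maximal M.
Proof.
suff H n : forall M, valid M -> #|[set: T * T]| - #|M| <= n -> exists M, valid M /\ maximal M.
  by apply: (H _ set0 valid0 (leqnn _)).
elim: n => [|n IH] M V le.
- exists M; split => // q qM Vq.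
  have : #|q |: M| <= #|[set: T * T]| by apply: subset_leq_card; apply: subsetT.
  by rewrite cardsU1 qM; move: le; lia.
- case: (classic (exists q, q \notin M /\ valid (q |: M))) => [[q [qM Vq]]|nx].
    apply: (IH _ Vq); rewrite cardsU1 qM.
    have : #|q |: M| <= #|[set: T * T]| by apply: subset_leq_card; apply: subsetT.
    by rewrite cardsU1 qM; move: le; lia.
  by exists M; split => // q qM Vq; apply: nx; exists q.
Qed.

Definition WM (M : {set T * T}) : {set T} :=
  ((fun q : T * T => q.1) @: M) :|: ((fun q : T * T => q.2) @: M).

Lemma WM_card (M : {set T * T}) : #|WM M| <= 2 * #|M|.
Proof. by rewrite mul2n -addnn; apply: leq_trans (leq_card_setU _ _) _; apply: leq_add; apply: leq_imset_card. Qed.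

Lemma WM1 (M : {set T * T}) q : q \in M -> q.1 \in WM M.
Proof. by move=> qM; rewrite in_setU; apply/orP; left; apply/imsetP; exists q. Qed.
Lemma WM2 (M : {set T * T}) q : q \in M -> q.2 \in WM M.
Proof. by move=> qM; rewrite in_setU; apply/orP; right; apply/imsetP; exists q. Qed.

Lemma hitting (M : {set T * T}) : valid M -> maximal M ->
  forall x y ps, is_banana e x y ps -> hits_banana (WM M) x y ps.
Proof.
move=> V mx x y ps B; have [c [[cy xc yc dc] mc]] := banana_cycle B.
case: (boolP (x \in WM M)) => xW; first by left.
case: (boolP (y \in WM M)) => yW; first by right; left.
case: (classic (exists2 q, q \in M & bad x /\ connect e x q.1)) => [[q qM [bx cxq]]|nq].
  have qc : q.1 \in c.
    apply: (closed_connect (Z := mem c)) cxq => // z w zc ezw.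
    have d2 : deg e z = 2.
      apply/eqP; move/forallP: bx => /(_ z) /implyP; apply; exact: (cycle_connect cy).
    exact: (cycle_closed cy zc d2 ezw).
  have qW := WM1 qM.
  case: (mc _ qc) => [E|E|[p pps vp]].
  - by left; rewrite -E.
  - by right; left; rewrite -E.
  - by right; right; exists p => //; exists q.1.
exfalso; have xyM : (x, y) \notin M by apply: contra xW => /WM1.
apply: (mx _ xyM); split.
- move=> q; rewrite in_setU1 => /orP[/eqP->|qM]; last exact: V.1.
  by exists c; split.
- have djxy q : q \in M -> [disjoint pset (x, y) & pset q].
    move=> qM; apply/pred0P=> z /=; apply/negbTE/negP=> /andP[].
    rewrite /pset !inE /= => zxy zq.
    have zW : z \in WM M by case/orP: zq => /eqP->; [apply: WM1|apply: WM2].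
    by case/orP: zxy => /eqP E; [move: xW | move: yW]; rewrite -E zW.
  move=> p q; rewrite !in_setU1 => /orP[/eqP->|pM] /orP[/eqP->|qM]; rewrite ?eqxx //.
  + move=> _; split; first exact: djxy.
    by case=> bx cxq; apply: nq; exists q.
  + move=> _; split; first by rewrite disjoint_sym; apply: djxy.
    case=> bp cpx; apply: nq; exists p => //; split.
      exact: bad_connect bp cpx.
    by rewrite esymC.
  + exact: V.2.
Qed.

Lemma bound u k (M : {set T * T}) : ~ has_Ktt_subgraph e u.+1 -> Ok_free e k -> 0 < k ->
  valid M -> #|M| < bC u * k ^ u.+1.
Proof.
move=> noK okf k0 V; rewrite ltnNge; apply/negP=> le.
have [M0 [sM0 cM0]] := sub_card le.
set s := sC u k.
have s0 : 0 < 2 * s by rewrite /s /sC addnS.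
have pd (S : {set T * T}) : S \subset M -> forall p q, p \in S -> q \in S -> p != q -> [disjoint pset p & pset q].
  move=> sS p q pS qS pq; exact: (V.2 _ _ (subsetP sS _ pS) (subsetP sS _ qS) pq).1.
have GH : forall S' : {set T * T}, S' \subset M0 -> S' != set0 ->
     exists2 p, p \in S' & #|[set q in S' | (q != p) && hadj p q]| < 2 * s.
  move=> S' sS' nS'.
  case: (boolP [exists p in S', #|[set q in S' | (q != p) && hadj p q]| < 2 * s]).
    by case/existsP=> p /andP[pS dp]; exists p.
  move/existsPn=> H; exfalso.
  have dg p : p \in S' -> 2 * s <= #|[set q in S' | (q != p) && hadj p q]|.
    by move=> pS; have := H p; rewrite pS /= -leqNgt.
  have K := KST noK (pd _ (subset_trans sS' sM0)) dg.
  have n0 : 0 < #|S'| by rewrite card_gt0.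
  have nb : #|S'| <= bC u * k ^ u.+1 by rewrite -cM0; apply: subset_leq_card.
  have A := arith k0 n0 nb; move: A K; rewrite -/s subn1 /=; nia.
have [I [sI indI cI]] := greedy hadj_sym s0 GH.
have kI : k <= #|I|.
  have : 2 * s * k <= 2 * s * #|I|.
    apply: leq_trans cI; rewrite cM0 /s /sC /bC.
    have h : k <= k ^ u.+1 by rewrite -{1}(expn1 k); apply: leq_pexp2l.
    have h2 : u.+1 * k <= u.+1 * k ^ u.+1 by rewrite leq_mul2l h orbT.
    move: h2; rewrite expnSr; nia.
  by rewrite leq_pmul2l.
have [J [sJ cJ]] := sub_card kI.
apply: okf; apply: (ok_from V (subset_trans sJ (subset_trans sI sM0)) cJ).
by move=> p q pJ qJ; apply: indI; apply: (subsetP sJ).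
Qed.
End G.

Theorem mainTheorem8 :
  exists f' : nat -> nat -> nat,
    (forall t : nat, exists C : nat, forall k : nat, 1 <= k -> f' t k <= C * k ^ t) /\
    (forall (t k : nat) (T : finType) (e : rel T),
        simple_graph e -> Ok_free e k -> ~ has_Ktt_subgraph e t ->
        exists X : {set T}, #|X| <= f' t k /\
          (forall (x y : T) (ps : seq (seq T)), is_banana e x y ps -> hits_banana X x y ps)).
Proof.
exists (fun t k => 2 * bC t.-1 * k ^ t); split.
  by move=> t; exists (2 * bC t.-1).
move=> t k T e [esym eirr] okf noK.
case: t noK => [|u] noK.
  exfalso; apply: noK; exists set0, set0; split.
  - exact: cards0.
  - exact: cards0.
  - by apply/pred0P=> x /=; rewrite inE.
  - by move=> a b; rewrite inE.
case: k okf => [|k] okf.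
  by exfalso; apply: okf; exists (fun _ => [::]); split; case.
have [M [V mx]] := @maximal_exists T e.
exists (WM M); split.
  apply: leq_trans (WM_card M) _; rewrite -mulnA leq_mul2l /=.
  by apply: ltnW; apply: bound.
exact: hitting.
Qed.
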